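(* Let $d\ge0$ and $n>d$ be integers and let $T\in L(n,d)$ with $T\neq\emptyset$. Then $$\mu_{n,d}(T)=\prod_{T_i\in T}\mu_{n-|T_i|,\,d-|T_i|}(\{\emptyset\}).$$
   Context: For a finite set $X$ let $\operatorname{codim}_d(X)=d+1-|X|$. For a finite collection $\{T_1,\dots,T_l\}$ of pairwise distinct finite sets put $\rho_d(\{T_1,\dots,T_l\})=\sum_{i=1}^l\operatorname{codim}_d(T_i)$ (with $\rho_d(\emptyset)=0$) and $D_d(\{T_1,\dots,T_l\})=\operatorname{codim}_d(T_1\cap\cdots\cap T_l)-\rho_d(\{T_1,\dots,T_l\})$. For integers $d\ge0$, $n>d$, $L(n,d)$ is the set of all collections $T$ of subsets of $\{1,\dots,n\}$ such that (i) $D_d(T')>0$ for every $T'\subset T$ with $|T'|>1$, and (ii) $0\le|T_i|\le d$ for every $T_i\in T$ (so $L(n,0)=\{\emptyset,\{\emptyset\}\}$; $\emptyset$ is the minimum and $\{\emptyset\}$ the maximum of $L(n,d)$). It is partially ordered by: $T<T'$ iff $\rho_d(T)<\rho_d(T')$ and for every $T_i\in T$ there exists $T'_j\in T'$ with $T'_j\subset T_i$; $T\le T'$ means $T<T'$ or $T=T'$. The Möbius function $\mu_{n,d}$ of $L(n,d)$ is defined by $\mu_{n,d}(T,T)=1$ and $\sum_{S:\,T\le S\le T'}\mu_{n,d}(T,S)=0$ for $T<T'$; and $\mu_{n,d}(T):=\mu_{n,d}(\emptyset,T)$. *)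

(* Defs.v *)
From mathcomp Require Import all_boot all_order all_algebra.
Set Implicit Arguments. Unset Strict Implicit. Unset Printing Implicit Defensive.
Import GRing.Theory Num.Theory.
Local Open Scope ring_scope.

(* Subsets of {1,...,n} are modelled as subsets of 'I_n; collections of such
   subsets as {set {set 'I_n}} (collections of pairwise distinct sets). *)

Definition codim (n d : nat) (X : {set 'I_n}) : int := (d.+1)%:Z - (#|X|)%:Z.

Definition rho (n d : nat) (T : {set {set 'I_n}}) : int :=
  \sum_(X in T) codim d X.

Definition Dd (n d : nat) (T : {set {set 'I_n}}) : int :=
  codim d (\bigcap_(X in T) X) - rho d T.

Definition inL (n d : nat) (T : {set {set 'I_n}}) : bool :=
  [forall T' : {set {set 'I_n}},
     ((T' \subset T) && (1 < #|T'|)%N) ==> (0 < Dd d T')]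
  && [forall X in T, (#|X| <= d)%N].

Definition ltL (n d : nat) (T T' : {set {set 'I_n}}) : bool :=
  (rho d T < rho d T') &&
  [forall X in T, [exists Y in T', Y \subset X]].

Definition leL (n d : nat) (T T' : {set {set 'I_n}}) : bool :=
  ltL d T T' || (T == T').

Fixpoint mobius_aux (n d : nat) (k : nat) (T T' : {set {set 'I_n}}) : int :=
  if T == T' then 1
  else if ltL d T T' then
    match k with
    | 0 => 0
    | k'.+1 => - \sum_(S : {set {set 'I_n}} | inL d S && leL d T S && ltL d S T')
                   mobius_aux d k' T S
    end
  else 0.

(* fuel: the number of collections, which bounds the length of any chain *)
Definition mobius (n d : nat) (T T' : {set {set 'I_n}}) : int :=
  mobius_aux d #|{: {set {set 'I_n}}}| T T'.

Definition mu (n d : nat) (T : {set {set 'I_n}}) : int := mobius d set0 T.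

(* Main.v *)
Require Import Defs.
From mathcomp Require Import all_boot all_order all_algebra.
From mathcomp Require Import zify ring lra.
Set Implicit Arguments. Unset Strict Implicit. Unset Printing Implicit Defensive.
Import Order.TTheory GRing.Theory Num.Theory.
Local Open Scope ring_scope.

Section Basic.
Variables (n d : nat).
Local Notation fam := {set {set 'I_n}}.
Implicit Types (S T U A B G : fam) (X Y Z : {set 'I_n}).

Definition refine S U := [forall Y in S, [exists Z in U, Z \subset Y]].

Lemma refineP S U : reflect (forall Y, Y \in S -> exists2 Z, Z \in U & Z \subset Y) (refine S U).
Proof.
apply: (iffP forall_inP) => H Y /H.
  by case/exists_inP=> Z; exists Z.
by case=> Z ZU ZY; apply/exists_inP; exists Z.
Qed.

Lemma inL_size S Y : inL d S -> Y \in S -> (#|Y| <= d)%N.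
Proof. by case/andP=> _ /forall_inP H /H. Qed.

Lemma inL_D S S' : inL d S -> S' \subset S -> (1 < #|S'|)%N -> 0 < Dd d S'.
Proof. by case/andP=> /forallP H _ sub c; move: (H S'); rewrite sub c. Qed.

Lemma inL_intro S : (forall S', S' \subset S -> (1 < #|S'|)%N -> 0 < Dd d S') ->
  (forall Y, Y \in S -> (#|Y| <= d)%N) -> inL d S.
Proof.
move=> H1 H2; apply/andP; split.
  by apply/forallP=> S'; apply/implyP=> /andP[]; apply: H1.
by apply/forall_inP.
Qed.

Lemma inL_sub S S' : inL d S -> S' \subset S -> inL d S'.
Proof.
move=> LS sub; apply: inL_intro.
  by move=> S'' s2 c; apply: (inL_D LS) => //; apply: subset_trans sub.
by move=> Y /(subsetP sub); apply: inL_size.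
Qed.

Lemma codimE X : codim d X = (d.+1)%:Z - (#|X|)%:Z.
Proof. by []. Qed.

Lemma codim_gt0 X : (#|X| <= d)%N -> 0 < codim d X.
Proof. rewrite codimE => h; rewrite subr_gt0 ltz_nat; lia. Qed.

Lemma rho_ge0 S : inL d S -> 0 <= rho d S.
Proof.
move=> LS; rewrite /rho; apply: sumr_ge0 => Y YS.
by apply: ltW; apply: codim_gt0; apply: inL_size LS YS.
Qed.

Lemma rho_gt0 S : inL d S -> S != set0 -> 0 < rho d S.
Proof.
move=> LS /set0Pn[Y YS]; rewrite /rho (bigD1 Y) //=.
apply: ltr_wpDr; last by apply: codim_gt0; apply: inL_size LS YS.
apply: sumr_ge0 => Z /andP[ZS _].
by apply: ltW; apply: codim_gt0; apply: inL_size LS ZS.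
Qed.

Lemma pair_far S Z1 Z2 Y : inL d S -> Z1 \in S -> Z2 \in S -> Z1 != Z2 ->
  Z1 \subset Y -> Z2 \subset Y -> (d < #|Y|)%N.
Proof.
move=> LS Z1S Z2S neq s1 s2.
have sub : [set Z1; Z2] \subset S by apply/subsetP=> W; rewrite !inE => /orP[]/eqP->.
have c : (1 < #|[set Z1; Z2]|)%N by rewrite cards2 neq.
have := inL_D LS sub c.
rewrite /Dd /rho big_setU1 ?inE //= big_set1 big_setU1 ?inE //= big_set1 !codimE.
have h1 : (#|Z1 :|: Z2| <= #|Y|)%N by apply: subset_leq_card; rewrite subUset s1 s2.
have h2 := cardsUI Z1 Z2.
move=> H.
have : (d.+1 + #|Z1 :&: Z2| < #|Z1| + #|Z2|)%N.
  rewrite -ltz_nat !PoszD; move: H.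
  set a := (Posz #|Z1 :&: Z2|); set b := Posz #|Z1|; set c' := Posz #|Z2|; set e := Posz d.+1.
  move=> H; rewrite -subr_gt0; apply: lt_le_trans H _; rewrite le_eqVlt; apply/orP; left; apply/eqP; ring.
rewrite -h2 ltn_add2r => hh; exact: leq_trans (ltnW hh) h1.
Qed.


Definition grp S Z := [set Y in S | Z \subset Y].
Definition pk U Y := odflt set0 [pick Z in U | Z \subset Y].

Lemma pk_spec U Y Z : inL d U -> Z \in U -> Z \subset Y -> (#|Y| <= d)%N -> pk U Y = Z.
Proof.
move=> LU ZU ZY hY; rewrite /pk; case: pickP => [Z' /andP[Z'U Z'Y] | H] /=.
  apply/eqP; apply: contraT => neq.
  by have := pair_far LU Z'U ZU neq Z'Y ZY; rewrite ltnNge hY.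
by have := H Z; rewrite ZU ZY.
Qed.

Lemma refine_refl S : refine S S.
Proof. by apply/refineP => Y YS; exists Y. Qed.

Lemma refine_trans S U V : refine S U -> refine U V -> refine S V.
Proof.
move=> /refineP h1 /refineP h2; apply/refineP => Y /h1[Z ZU ZY].
by case: (h2 _ ZU) => W WV WZ; exists W => //; apply: subset_trans ZY.
Qed.

Lemma refine_sub S S' U : S' \subset S -> refine S U -> refine S' U.
Proof. by move=> sub /refineP h; apply/refineP => Y /(subsetP sub) /h. Qed.

Lemma big_partition (R : Type) (idx : R) (op : Monoid.com_law idx) U U' S (F : {set 'I_n} -> R) :
  inL d U -> U' \subset U -> (forall Y, Y \in S -> (#|Y| <= d)%N) -> refine S U' ->
  \big[op/idx]_(Y in S) F Y = \big[op/idx]_(Z in U') \big[op/idx]_(Y in grp S Z) F Y.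
Proof.
move=> LU sub hS /refineP rf.
have key : forall Y, Y \in S -> pk U Y \in U' /\ (forall Z, Z \in U' -> (pk U Y == Z) = (Z \subset Y)).
  move=> Y YS; case: (rf _ YS) => Z0 Z0U Z0Y.
  have e0 : pk U Y = Z0 by apply: pk_spec => //; [apply: (subsetP sub) | apply: hS].
  split; first by rewrite e0.
  move=> Z ZU; rewrite e0; apply/eqP/idP => [<- // | ZY].
  by rewrite -e0; apply: pk_spec => //; [apply: (subsetP sub) | apply: hS].
rewrite (partition_big (pk U) (fun Z => Z \in U')); last by move=> Y /key[].
apply: eq_bigr => Z ZU'; apply: eq_bigl => Y; rewrite /grp inE.
by case YS: (Y \in S) => //=; case: (key _ YS) => _ ->.
Qed.

Lemma bigcap_set1 (Y : {set 'I_n}) : \bigcap_(W in [set Y]) W = Y.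
Proof. by rewrite big_set1. Qed.

Lemma D_ge0 G : inL d G -> G != set0 ->
  rho d G <= codim d (\bigcap_(Y in G) Y) /\ ((1 < #|G|)%N -> rho d G < codim d (\bigcap_(Y in G) Y)).
Proof.
move=> LG G0.
case: (ltnP 1 #|G|) => c.
  have := inL_D LG (subxx G) c; rewrite /Dd subr_gt0 => h.
  by split; [apply: ltW | move=> _].
have : #|G| == 1%N.
  by rewrite eqn_leq c /= card_gt0.
case/cards1P => Y ->; rewrite /rho !big_set1; split => //; by rewrite cards1.
Qed.

Lemma grp_le G Z : inL d G -> (forall Y, Y \in G -> Z \subset Y) -> (#|Z| <= d)%N ->
  rho d G <= codim d Z /\ (rho d G = codim d Z -> G = [set Z]).
Proof.
move=> LG hZ hd.
case: (eqVneq G set0) => [-> | G0].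
  rewrite /rho big_set0; have h := codim_gt0 hd; split; first by apply: ltW.
  by move=> e; move: h; rewrite -e ltxx.
have sub : Z \subset \bigcap_(Y in G) Y by apply/bigcapsP.
have le1 : codim d (\bigcap_(Y in G) Y) <= codim d Z.
  by rewrite !codimE lerD2l lerN2 lez_nat; apply: subset_leq_card.
case: (D_ge0 LG G0) => h1 h2; split; first by apply: le_trans le1.
move=> e.
case: (ltnP 1 #|G|) => c.
  by have := lt_le_trans (h2 c) le1; rewrite e ltxx.
have : #|G| == 1%N by rewrite eqn_leq c /= card_gt0.
case/cards1P => Y GY; rewrite GY; congr [set _].
move: e; rewrite GY /rho big_set1 !codimE => /addrI /oppr_inj /eqP; rewrite eqz_nat => /eqP e.
apply/esym/eqP; rewrite eqEcard e leqnn andbT; apply: hZ; rewrite GY set11.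
by [].
Qed.

Lemma rho_partition U S : inL d U -> (forall Y, Y \in S -> (#|Y| <= d)%N) -> refine S U ->
  rho d S = \sum_(Z in U) rho d (grp S Z).
Proof. by move=> LU hS rf; rewrite /rho (big_partition _ _ LU (subxx U)). Qed.

Lemma rho_lt U S : inL d U -> inL d S -> refine S U -> S != U -> rho d S < rho d U.
Proof.
move=> LU LS rf neq.
have hS : forall Y, Y \in S -> (#|Y| <= d)%N by move=> Y; apply: inL_size.
have LG : forall Z, inL d (grp S Z) by move=> Z; apply: inL_sub LS _; apply/subsetP => Y; rewrite inE => /andP[].
have hG : forall Z, Z \in U -> rho d (grp S Z) <= codim d Z /\ (rho d (grp S Z) = codim d Z -> grp S Z = [set Z]).
  move=> Z ZU; apply: grp_le => //; last by apply: inL_size LU ZU.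
  by move=> Y; rewrite inE => /andP[].
rewrite (rho_partition LU hS rf) lt_neqAle; apply/andP; split; last first.
  by rewrite /rho; apply: ler_sum => Z ZU; case: (hG Z ZU).
apply: contra neq => /eqP e.
have e2 : \sum_(Z in U) (codim d Z - rho d (grp S Z)) = 0 by rewrite sumrB e /rho subrr.
have allZ : forall Z, Z \in U -> grp S Z = [set Z].
  move=> Z ZU; case: (hG Z ZU) => _; apply; apply/eqP; rewrite eq_sym -subr_eq0; apply/eqP.
  by apply: (psumr_eq0P _ e2) => // Z' Z'U; rewrite subr_ge0; case: (hG Z' Z'U).
apply/eqP/setP => Y; apply/idP/idP => [YS | YU].
  have [Z ZU ZY] := (refineP _ _ rf) _ YS.
  have : Y \in grp S Z by rewrite inE YS ZY.
  by rewrite allZ // inE => /eqP ->.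
have : Y \in grp S Y by rewrite allZ // set11.
by rewrite inE => /andP[].
Qed.


Lemma card_bigcup_le (I : finType) (P : pred I) (F : I -> {set 'I_n}) :
  (#|\bigcup_(i | P i) F i| <= \sum_(i | P i) #|F i|)%N.
Proof.
elim/big_rec2: _ => [|i s A _ h]; first by rewrite cards0.
apply: leq_trans (leq_card_setU (F i) A).1 _.
by rewrite leq_add2l.
Qed.

Lemma card_cap_le (I : finType) (P : pred I) (B Z : I -> {set 'I_n}) :
  (forall i, P i -> Z i \subset B i) ->
  (#|\bigcap_(i | P i) B i| <= #|\bigcap_(i | P i) Z i| + \sum_(i | P i) (#|B i| - #|Z i|))%N.
Proof.
move=> ZB.
have sub : \bigcap_(i | P i) B i \subset
           (\bigcap_(i | P i) Z i) :|: \bigcup_(i | P i) (B i :\: Z i).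
  apply/subsetP => x /bigcapP xB; rewrite inE.
  case: (boolP (x \in \bigcap_(i | P i) Z i)) => //= xZ.
  case: (boolP [exists i, P i && (x \notin Z i)]) => [/existsP[i /andP[Pi xZi]] | /existsPn H].
    by apply/bigcupP; exists i => //; rewrite inE xZi xB.
  exfalso; apply: (negP xZ); apply/bigcapP => i Pi.
  by move: (H i); rewrite Pi /= negbK.
apply: leq_trans (subset_leq_card sub) _.
apply: leq_trans (leq_card_setU _ _).1 _; rewrite leq_add2l.
apply: leq_trans (card_bigcup_le _ _) _; apply: leq_sum => i Pi.
by rewrite cardsD; move/setIidPr: (ZB i Pi) => ->.
Qed.

Lemma union_inL U S : inL d U -> (forall Y, Y \in S -> (#|Y| <= d)%N) -> refine S U ->
  (forall Z, Z \in U -> inL d (grp S Z)) -> inL d S.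
Proof.
move=> LU hS rf LG; apply: inL_intro => // S' sub c.
have hS' : forall Y, Y \in S' -> (#|Y| <= d)%N by move=> Y /(subsetP sub); apply: hS.
have rf' : refine S' U by apply: refine_sub sub rf.
pose I := [set Z in U | grp S' Z != set0].
have IU : I \subset U by apply/subsetP => Z; rewrite inE => /andP[].
have rfI : refine S' I.
  apply/refineP => Y YS; have [Z ZU ZY] := (refineP _ _ rf') _ YS.
  exists Z => //; rewrite inE ZU; apply/set0Pn; exists Y; rewrite inE YS ZY.
  by [].
have grpsub : forall Z, grp S' Z \subset grp S Z.
  by move=> Z; apply/subsetP => Y; rewrite !inE => /andP[/(subsetP sub) -> ->].
have LG' : forall Z, Z \in I -> inL d (grp S' Z).
  by move=> Z ZI; apply: inL_sub (grpsub Z); apply: LG; apply: (subsetP IU).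
case: (ltnP 1 #|I|) => cI; last first.
  have [Y YS] : exists Y, Y \in S'.
    by apply/set0Pn; rewrite -card_gt0; apply: ltnW.
  have [Z0 Z0I _] := (refineP _ _ rfI) _ YS.
  have : #|I| == 1%N by rewrite eqn_leq cI /= card_gt0; apply/set0Pn; exists Z0.
  case/cards1P => Z1 IZ1.
  have sub2 : S' \subset grp S Z1.
    apply/subsetP => W WS; have [Z ZI ZW] := (refineP _ _ rfI) _ WS.
    move: ZI; rewrite IZ1 inE => /eqP eZ; rewrite inE (subsetP sub _ WS) -eZ ZW.
    by [].
  apply: (inL_D (LG Z1 _) sub2 c).
  by apply: (subsetP IU); rewrite IZ1 set11.
pose B := fun Z => \bigcap_(Y in grp S' Z) Y.
have capE : \bigcap_(Y in S') Y = \bigcap_(Z in I) B Z.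
  by apply: (big_partition _ _ LU IU hS' rfI).
have rhoE : rho d S' = \sum_(Z in I) rho d (grp S' Z).
  by rewrite /rho (big_partition _ _ LU IU hS' rfI).
have hB : forall Z, Z \in I -> rho d (grp S' Z) <= codim d (B Z).
  move=> Z ZI; have := LG' Z ZI; move: ZI; rewrite inE => /andP[_ ne] L'.
  by case: (D_ge0 L' ne).
have ZB : forall Z, Z \in I -> Z \subset B Z.
  by move=> Z _; apply/bigcapsP => Y; rewrite inE => /andP[].
have DI : 0 < Dd d I := inL_D LU IU cI.
have cardI := card_cap_le ZB.
have cardIz : (#|\bigcap_(Z in I) B Z|)%:Z <= (#|\bigcap_(Z in I) Z|)%:Z +
     \sum_(Z in I) ((#|B Z|)%:Z - (#|Z|)%:Z).
  move: cardI; rewrite -lez_nat PoszD => h; apply: le_trans h _.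
  rewrite lerD2l -!natz natr_sum; apply: ler_sum => Z ZI.
  by rewrite natz subzn // subset_leq_card // ZB.
have s1 : \sum_(Z in I) rho d (grp S' Z) <= \sum_(Z in I) codim d (B Z) by apply: ler_sum.
have s2 : \sum_(Z in I) codim d (B Z) =
    \sum_(Z in I) codim d Z - \sum_(Z in I) ((#|B Z|)%:Z - (#|Z|)%:Z).
  rewrite -sumrB; apply: eq_bigr => Z _; rewrite !codimE; ring.
rewrite /Dd capE rhoE.
move: DI s1 s2 cardIz; rewrite /Dd /rho !codimE.
set a := \sum_(Z in I) rho d (grp S' Z).
set b := \sum_(Z in I) codim d (B Z).
set e := \sum_(Z in I) ((#|B Z|)%:Z - (#|Z|)%:Z).
set f := \sum_(Z in I) codim d Z.
set g := Posz #|\bigcap_(Z in I) B Z|.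
set h := Posz #|\bigcap_(Z in I) Z|.
move=> DI s1 s2 cardIz.
apply: lt_le_trans DI _.
have -> : (d.+1)%:Z - h - f = (d.+1)%:Z - (h + e) - (f - e) by ring.
apply: lerB; first by apply: lerB.
by rewrite -s2.
Qed.

End Basic.

Section Rec.
Variables (n d : nat).
Hypothesis hdn : (d < n)%N.
Local Notation fam := {set {set 'I_n}}.
Implicit Types (S T U A B G : fam) (X Y Z : {set 'I_n}).

Lemma inL_top : inL d [set set0 : {set 'I_n}].
Proof.
apply: inL_intro => [S' sub c | Y]; last by rewrite inE => /eqP ->; rewrite cards0.
by have := subset_leq_card sub; rewrite cards1 leqNgt c.
Qed.

Lemma rho_le_top S : inL d S -> rho d S <= (d.+1)%:Z.
Proof.
move=> LS.
have e : rho d [set set0 : {set 'I_n}] = (d.+1)%:Z by rewrite /rho big_set1 codimE cards0 subr0.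
case: (eqVneq S [set set0]) => [-> | neq]; first by rewrite e.
rewrite -e; apply: ltW; apply: rho_lt => //; first exact: inL_top.
by apply/refineP => Y _; exists set0; rewrite ?set11 ?sub0set.
Qed.

Lemma K_ge : (n <= #|{: fam}|)%N.
Proof.
have inj : injective (fun i : 'I_n => [set [set i]]).
  by move=> i j /set1_inj /set1_inj.
by have := @leq_card _ _ _ inj; rewrite card_ord.
Qed.

Lemma ltL0 S : inL d S -> S != set0 -> ltL d set0 S.
Proof.
move=> LS S0; rewrite /ltL {1}/rho big_set0 rho_gt0 //=.
by apply/forall_inP => Y; rewrite inE.
Qed.

Lemma leL0 S : inL d S -> leL d set0 S.
Proof.
move=> LS; rewrite /leL; case: (eqVneq S set0) => [-> | S0]; first by rewrite ?eqxx ?orbT.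
by rewrite ltL0.
Qed.

Lemma fuel k1 k2 T : inL d T -> rho d T <= k1%:Z -> rho d T <= k2%:Z ->
  mobius_aux d k1 set0 T = mobius_aux d k2 set0 T.
Proof.
elim: k1 k2 T => [|k1 IH] k2 T LT h1 h2.
  case: (eqVneq T set0) => [-> | T0].
    by case: k2 {h2} => [|k2] /=; rewrite ?eqxx.
  by have := lt_le_trans (rho_gt0 LT T0) h1; rewrite ltxx.
case: (eqVneq T set0) => [-> | T0].
  by case: k2 {h2} => [|k2] /=; rewrite ?eqxx.
case: k2 h2 => [|k2] h2.
  by have := lt_le_trans (rho_gt0 LT T0) h2; rewrite ltxx.
rewrite /= eq_sym (negbTE T0) ltL0 //; congr (- _); apply: eq_bigr => S /andP[/andP[LS _] lt].
have hS : rho d S < rho d T by case/andP: lt.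
apply: IH => //.
  by have := lt_le_trans hS h1; rewrite -[k1.+1]addn1 PoszD ltzD1.
by have := lt_le_trans hS h2; rewrite -[k2.+1]addn1 PoszD ltzD1.
Qed.

Lemma mu0 : mu d (set0 : fam) = 1.
Proof. by rewrite /mu /mobius; case: #|_| => [|k] /=; rewrite ?eqxx. Qed.

Lemma rho_le_K S : inL d S -> rho d S <= (#|{: fam}|)%:Z.
Proof.
move=> LS; apply: le_trans (rho_le_top LS) _; rewrite lez_nat.
exact: leq_trans hdn K_ge.
Qed.

Lemma mu_rec T : inL d T -> T != set0 -> mu d T = - \sum_(S | inL d S && ltL d S T) mu d S.
Proof.
move=> LT T0; rewrite /mu /mobius.
have hK := rho_le_K LT.
have Kpos : (0 < #|{: fam}|)%N := leq_trans (ltn0Sn d) (leq_trans hdn K_ge).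
move: hK Kpos; case: #|_| => [//|k] hK _.
rewrite /= eq_sym (negbTE T0) ltL0 //; congr (- _).
apply: eq_big => [S | S /andP[/andP[LS _] lt]].
  by case LS: (inL d S); rewrite //= leL0.
rewrite -[RHS]/(mobius_aux d k.+1 set0 S).
have hS : rho d S < rho d T by case/andP: lt.
apply: fuel => //; last by apply: ltW (lt_le_trans hS hK).
by have := lt_le_trans hS hK; rewrite -[k.+1]addn1 PoszD ltzD1.
Qed.

Lemma ltL_ref S T : inL d S -> inL d T -> ltL d S T = refine S T && (S != T).
Proof.
move=> LS LT; apply/idP/idP => [/andP[lt rf] | /andP[rf neq]].
  by apply/andP; split; [exact: rf | apply: contraTneq lt => ->; rewrite ltxx].
by rewrite /ltL rho_lt.
Qed.

Lemma mu_sum T : inL d T -> T != set0 -> \sum_(S | inL d S && refine S T) mu d S = 0.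
Proof.
move=> LT T0; rewrite (bigD1 T) /=; last by rewrite LT refine_refl.
rewrite (mu_rec LT T0) addrC; apply/eqP; rewrite subr_eq0; apply/eqP.
apply: eq_bigl => S; case LS: (inL d S) => //=.
by rewrite ltL_ref.
Qed.

End Rec.

Section Prod.
Variables (n d : nat).
Hypothesis hdn : (d < n)%N.
Local Notation fam := {set {set 'I_n}}.
Implicit Types (S A B : fam) (Y Z : {set 'I_n}).
Variables (T : fam) (X : {set 'I_n}).
Hypotheses (LT : inL d T) (XT : X \in T).
Local Notation T' := (T :\ X).

Lemma B_notX B Y : refine B T' -> Y \in B -> (#|Y| <= d)%N -> ~~ (X \subset Y).
Proof.
move=> rf YB hY; have [Z ZT' ZY] := (refineP _ _ rf) _ YB.
move: ZT'; rewrite !inE => /andP[ZX ZT]; apply/negP => XY.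
have ne : X != Z by rewrite eq_sym.
by have := pair_far LT XT ZT ne XY ZY; rewrite ltnNge hY.
Qed.

Lemma A_X A Y : refine A [set X] -> Y \in A -> X \subset Y.
Proof. by move=> rf YA; have [Z] := (refineP _ _ rf) _ YA; rewrite inE => /eqP ->. Qed.

Lemma rho_le S U : inL d S -> inL d U -> refine S U -> rho d S <= rho d U.
Proof.
move=> LS LU rf; case: (eqVneq S U) => [-> // | neq].
by apply: ltW; apply: rho_lt.
Qed.

Lemma union_L A B : inL d A -> inL d B -> refine A [set X] -> refine B T' -> inL d (A :|: B).
Proof.
move=> LA LB rA rB.
have hS : forall Y, Y \in A :|: B -> (#|Y| <= d)%N.
  by move=> Y; rewrite inE => /orP[] h; [apply: inL_size LA h | apply: inL_size LB h].
apply: (union_inL LT hS).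
  apply/refineP => Y; rewrite inE => /orP[] h.
    by exists X => //; apply: A_X rA h.
  have [Z ZT' ZY] := (refineP _ _ rB) _ h.
  by exists Z => //; move: ZT'; rewrite inE => /andP[].
move=> Z ZT; case: (eqVneq Z X) => [-> | ZX].
  apply: inL_sub LA _; apply/subsetP => Y; rewrite !inE => /andP[/orP[] // YB XY].
  by have := B_notX rB YB (inL_size LB YB); rewrite XY.
apply: inL_sub LB _; apply/subsetP => Y; rewrite !inE => /andP[/orP[] // YA ZY].
have XY := A_X rA YA.
by have := pair_far LT ZT XT ZX ZY XY; rewrite ltnNge (inL_size LA YA).
Qed.

Definition p1 S := [set Y in S | X \subset Y].
Definition p2 S := [set Y in S | ~~ (X \subset Y)].

Lemma p12 S : p1 S :|: p2 S = S.
Proof. by apply/setP => Y; rewrite !inE; case: (Y \in S); case: (X \subset Y). Qed.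

Lemma p1_sub S : p1 S \subset S.
Proof. by apply/subsetP => Y; rewrite inE => /andP[]. Qed.

Lemma p2_sub S : p2 S \subset S.
Proof. by apply/subsetP => Y; rewrite inE => /andP[]. Qed.

Lemma parts S A B : inL d S -> refine S (A :|: B) -> refine A [set X] -> refine B T' ->
  refine (p1 S) A /\ refine (p2 S) B.
Proof.
move=> LS rf rA rB; split; apply/refineP => Y; rewrite inE => /andP[YS XY];
  have [W] := (refineP _ _ rf) _ YS; rewrite inE => /orP[] WAB WY.
- by exists W.
- have [Z ZT' ZW] := (refineP _ _ rB) _ WAB.
  move: ZT'; rewrite !inE => /andP[ZX ZT].
  by have := pair_far LT ZT XT ZX (subset_trans ZW WY) XY; rewrite ltnNge (inL_size LS YS).
- by have := subset_trans (A_X rA WAB) WY; rewrite (negbTE XY).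
- by exists W.
Qed.

Lemma p_union S1 S2 : (forall Y, Y \in S1 -> X \subset Y) -> (forall Y, Y \in S2 -> ~~ (X \subset Y)) ->
  p1 (S1 :|: S2) = S1 /\ p2 (S1 :|: S2) = S2.
Proof.
move=> h1 h2; split; apply/setP => Y; rewrite !inE.
  case YS1: (Y \in S1); first by rewrite h1.
  by case YS2: (Y \in S2) => //=; rewrite (negbTE (h2 _ YS2)).
case YS1: (Y \in S1) => /=; last by case YS2: (Y \in S2) => //=; rewrite h2.
rewrite h1 //=; apply/esym/negP => YS2.
by have := h2 _ YS2; rewrite h1.
Qed.

Lemma rhoU S1 S2 : (forall Y, Y \in S1 -> X \subset Y) -> (forall Y, Y \in S2 -> ~~ (X \subset Y)) ->
  rho d (S1 :|: S2) = rho d S1 + rho d S2.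
Proof.
move=> h1 h2; rewrite /rho.
rewrite (eq_bigl [predU S1 & S2]); last by move=> Y; rewrite !inE.
rewrite bigU //; rewrite disjoint_subset; apply/subsetP => Y YS1; rewrite !inE /=.
by apply/negP => YS2; have := h2 _ YS2; rewrite h1.
Qed.

Lemma sum_split A B (F : fam -> int) : inL d A -> inL d B -> refine A [set X] -> refine B T' ->
  \sum_(S | inL d S && refine S (A :|: B)) F S =
  \sum_(S1 | inL d S1 && refine S1 A) \sum_(S2 | inL d S2 && refine S2 B) F (S1 :|: S2).
Proof.
move=> LA LB rA rB.
rewrite (partition_big p1 (fun S1 => inL d S1 && refine S1 A)); last first.
  move=> S /andP[LS rf]; rewrite (inL_sub LS (p1_sub S)) /=.
  by case: (parts LS rf rA rB).
apply: eq_bigr => S1 /andP[LS1 rf1].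
rewrite (reindex_onto (fun S2 => S1 :|: S2) p2); last first.
  by move=> S /andP[_ /eqP <-]; apply: p12.
apply: eq_bigl => S2.
have h1 : forall Y, Y \in S1 -> X \subset Y by move=> Y; apply: A_X (refine_trans rf1 rA).
apply/idP/idP.
  move=> /andP[/andP[/andP[LU rfU] _] /eqP e2].
  rewrite (inL_sub LU (subsetUr S1 S2)) /=.
  by case: (parts LU rfU rA rB); rewrite e2.
move=> /andP[LS2 rf2].
have h2 : forall Y, Y \in S2 -> ~~ (X \subset Y).
  by move=> Y YS2; apply: B_notX (refine_trans rf2 rB) YS2 (inL_size LS2 YS2).
case: (p_union h1 h2) => -> ->; rewrite !eqxx !andbT.
rewrite union_L //; [|exact: refine_trans rf1 rA | exact: refine_trans rf2 rB].
apply/refineP => Y; rewrite inE => /orP[] h.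
  by have [W WA WY] := (refineP _ _ rf1) _ h; exists W; rewrite // inE WA.
by have [W WB WY] := (refineP _ _ rf2) _ h; exists W; rewrite // inE WB orbT.
Qed.

Lemma prodlemma k A B : inL d A -> inL d B -> refine A [set X] -> refine B T' ->
  rho d A + rho d B < k%:Z -> mu d (A :|: B) = mu d A * mu d B.
Proof.
elim: k A B => [|k IH] A B LA LB rA rB hk.
  by have := lt_le_trans hk (addr_ge0 (rho_ge0 LA) (rho_ge0 LB)); rewrite ltxx.
case: (eqVneq A set0) => [-> | A0]; first by rewrite set0U mu0 // mul1r.
case: (eqVneq B set0) => [-> | B0]; first by rewrite setU0 mu0 // mulr1.
have LW := union_L LA LB rA rB.
have W0 : A :|: B != set0 by apply: contraNneq A0 => e; rewrite -subset0 -e subsetUl.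
have hk' : rho d A + rho d B <= k%:Z by move: hk; rewrite -[k.+1]addn1 PoszD ltzD1.
have IHs : forall S1 S2, inL d S1 -> inL d S2 -> refine S1 A -> refine S2 B -> (S1 != A) || (S2 != B) ->
    mu d (S1 :|: S2) = mu d S1 * mu d S2.
  move=> S1 S2 L1 L2 r1 r2 ne; apply: IH => //.
  - exact: refine_trans r1 rA.
  - exact: refine_trans r2 rB.
  apply: lt_le_trans hk'.
  case/orP: ne => ne.
    by apply: ltr_leD; [apply: rho_lt | apply: rho_le].
  by apply: ler_ltD; [apply: rho_le | apply: rho_lt].
have e0 := mu_sum hdn LW W0.
rewrite (sum_split _ LA LB rA rB) in e0.
have e1 : \sum_(S1 | inL d S1 && refine S1 A) \sum_(S2 | inL d S2 && refine S2 B) (mu d S1 * mu d S2) = 0.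
  rewrite (eq_bigr (fun S1 => mu d S1 * 0)); first by rewrite big1 // => S1 _; rewrite mulr0.
  by move=> S1 _; rewrite -mulr_sumr (mu_sum hdn LB B0).
have e2 : \sum_(S1 | inL d S1 && refine S1 A) \sum_(S2 | inL d S2 && refine S2 B)
     (mu d (S1 :|: S2) - mu d S1 * mu d S2) = mu d (A :|: B) - mu d A * mu d B.
  rewrite (bigD1 A) /=; last by rewrite LA refine_refl.
  rewrite [X in _ + X]big1 ?addr0; last first.
    move=> S1 /andP[/andP[L1 r1] ne]; apply: big1 => S2 /andP[L2 r2].
    by rewrite IHs ?ne ?subrr.
  rewrite (bigD1 B) /=; last by rewrite LB refine_refl.
  rewrite [X in _ + X]big1 ?addr0 //.
  move=> S2 /andP[/andP[L2 r2] ne].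
  by rewrite IHs ?refine_refl ?ne ?orbT ?subrr.
apply/eqP; rewrite -subr_eq0 -e2.
under eq_bigr do rewrite sumrB.
by rewrite sumrB e0 e1 subrr.
Qed.

Lemma mu_split : mu d T = mu d [set X] * mu d (T :\ X).
Proof.
have LX : inL d [set X] by apply: inL_sub LT _; rewrite sub1set.
have LT' : inL d (T :\ X) by apply: inL_sub LT _; apply: subsetDl.
rewrite -{1}(setD1K XT).
apply: (@prodlemma (absz (rho d [set X] + rho d (T :\ X))).+1) => //; try exact: refine_refl.
by rewrite -[_.+1]addn1 PoszD ltzD1 abszE ler_norm.
Qed.

End Prod.

Lemma mu_prod n d (T : {set {set 'I_n}}) : (d < n)%N -> inL d T -> T != set0 ->
  mu d T = \prod_(Y in T) mu d [set Y].
Proof.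
move=> hdn; move: {2}#|T| (erefl #|T|) => m; elim: m T => [|m IH] T cT LT T0.
  by move: T0; rewrite -card_gt0 cT.
have [X XT] := set0Pn _ T0.
rewrite (big_setD1 X XT) /=.
case: (eqVneq (T :\ X) set0) => [e | ne].
  rewrite e big_set0 mulr1.
  by have -> : T = [set X] by rewrite -(setD1K XT) e setU0.
rewrite (mu_split hdn LT XT) (IH (T :\ X)) //.
  by move: cT; rewrite (cardsD1 X) XT add1n => /eqP; rewrite eqSS => /eqP.
by apply: inL_sub LT _; apply: subsetDl.
Qed.

Section Relabel.
Variables (n d : nat) (X : {set 'I_n}).
Hypotheses (hXd : (#|X| <= d)%N) (hdn : (d < n)%N).
Local Notation n' := (n - #|X|)%N.
Local Notation d' := (d - #|X|)%N.

Lemma cardC_eq : #|~: X| = n'.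
Proof.
have h := cardsC X; rewrite card_ord in h.
apply/eqP; rewrite -(eqn_add2l #|X|) h subnKC //.
by have := max_card (mem X); rewrite card_ord.
Qed.

Definition emb (i : 'I_n') : 'I_n := enum_val (cast_ord (esym cardC_eq) i).

Lemma emb_inj : injective emb.
Proof. by move=> i j /enum_val_inj /cast_ord_inj. Qed.

Lemma emb_notin i : emb i \notin X.
Proof. by have := enum_valP (cast_ord (esym cardC_eq) i); rewrite inE. Qed.

Lemma emb_surj y : y \notin X -> exists i, emb i = y.
Proof.
move=> yX; have yC : y \in ~: X by rewrite inE.
exists (cast_ord cardC_eq (enum_rank_in yC y)).
by rewrite /emb cast_ordK enum_rankK_in.
Qed.

Definition phi (U : {set 'I_n'}) : {set 'I_n} := X :|: emb @: U.
Definition Phi (S : {set {set 'I_n'}}) : {set {set 'I_n}} := phi @: S.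
Definition Psi (R : {set {set 'I_n}}) : {set {set 'I_n'}} := [set U | phi U \in R].

Lemma mem_phi_emb i U : (emb i \in phi U) = (i \in U).
Proof. by rewrite inE (negbTE (emb_notin i)) /= mem_imset //; apply: emb_inj. Qed.

Lemma phi_inj : injective phi.
Proof. by move=> U1 U2 e; apply/setP => i; rewrite -!mem_phi_emb e. Qed.

Lemma phi_sub U1 U2 : (phi U1 \subset phi U2) = (U1 \subset U2).
Proof.
apply/idP/idP => h.
  by apply/subsetP => i; rewrite -!mem_phi_emb => /(subsetP h).
by rewrite /phi setUS // imsetS.
Qed.

Lemma X_phi U : X \subset phi U.
Proof. exact: subsetUl. Qed.

Lemma card_phi U : #|phi U| = (#|X| + #|U|)%N.
Proof.
rewrite /phi cardsU (card_imset _ emb_inj).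
have -> : X :&: emb @: U = set0.
  apply/setP => x; rewrite !inE; apply/negP => /andP[xX /imsetP[i _ ei]].
  by move: xX; rewrite ei (negbTE (emb_notin i)).
by rewrite cards0 subn0.
Qed.

Lemma phi_surj (Y : {set 'I_n}) : X \subset Y -> phi [set i | emb i \in Y] = Y.
Proof.
move=> XY; apply/setP => x; case: (boolP (x \in X)) => xX.
  by rewrite inE xX (subsetP XY).
by have [i <-] := emb_surj xX; rewrite mem_phi_emb inE.
Qed.

Lemma codim_phi U : codim d (phi U) = codim d' U.
Proof.
rewrite !codimE card_phi !intS PoszD -(subzn hXd).
ring.
Qed.

Lemma bigcap_phi S : \bigcap_(Y in Phi S) Y = phi (\bigcap_(U in S) U).
Proof.
rewrite /Phi big_imset /=; last by move=> U1 U2 _ _; apply: phi_inj.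
apply/setP => x; case: (boolP (x \in X)) => xX.
  by rewrite inE xX; apply/bigcapP => U _; rewrite inE xX.
have [i <-] := emb_surj xX; rewrite mem_phi_emb.
apply/bigcapP/bigcapP => H U US.
  by rewrite -mem_phi_emb; apply: H.
by rewrite mem_phi_emb; apply: H.
Qed.

Lemma rho_Phi S : rho d (Phi S) = rho d' S.
Proof.
rewrite /rho /Phi big_imset /=; last by move=> U1 U2 _ _; apply: phi_inj.
by apply: eq_bigr => U _; apply: codim_phi.
Qed.

Lemma card_Phi S : #|Phi S| = #|S|.
Proof. by rewrite card_imset //; apply: phi_inj. Qed.

Lemma D_Phi S : Dd d (Phi S) = Dd d' S.
Proof. by rewrite /Dd bigcap_phi codim_phi rho_Phi. Qed.

Lemma PhiPsi (R : {set {set 'I_n}}) : (forall Y, Y \in R -> X \subset Y) -> Phi (Psi R) = R.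
Proof.
move=> h; apply/setP => Y; apply/imsetP/idP.
  by case=> U; rewrite inE => hU ->.
move=> YR; exists [set i | emb i \in Y]; last by rewrite phi_surj // h.
by rewrite inE phi_surj // h.
Qed.

Lemma PsiPhi S : Psi (Phi S) = S.
Proof. by apply/setP => U; rewrite inE mem_imset //; apply: phi_inj. Qed.

Lemma Phi_sub S1 S2 : (Phi S1 \subset Phi S2) = (S1 \subset S2).
Proof.
apply/idP/idP => h; last exact: imsetS.
by apply/subsetP => U US1; rewrite -(mem_imset _ _ phi_inj); apply: (subsetP h); apply: imset_f.
Qed.

Lemma inL_Phi S : inL d (Phi S) = inL d' S.
Proof.
apply/idP/idP => L.
  apply: inL_intro => [S' sub c | U US].
    by rewrite -D_Phi; apply: (inL_D L); rewrite ?Phi_sub ?card_Phi.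
  have := inL_size L (imset_f phi US); rewrite card_phi => h.
  by rewrite leq_subRL.
apply: inL_intro => [S'' sub c | Y /imsetP[U US ->]]; last first.
  by rewrite card_phi -leq_subRL //; apply: inL_size L US.
have hX : forall Y, Y \in S'' -> X \subset Y.
  by move=> Y /(subsetP sub) /imsetP[U _ ->]; apply: X_phi.
have e := PhiPsi hX.
rewrite -e D_Phi; apply: (inL_D L).
  rewrite -Phi_sub e; exact: sub.
by rewrite -card_Phi e.
Qed.

Lemma refine_Phi S1 S2 : refine (Phi S1) (Phi S2) = refine S1 S2.
Proof.
apply/refineP/refineP => H.
  move=> U US1; have [W /imsetP[U' U'S2 ->] WY] := H _ (imset_f phi US1).
  by exists U'; rewrite // -phi_sub.
move=> Y /imsetP[U US1 ->]; have [U' U'S2 sub] := H _ US1.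
by exists (phi U'); [apply: imset_f | rewrite phi_sub].
Qed.

Lemma ltL_Phi S1 S2 : ltL d (Phi S1) (Phi S2) = ltL d' S1 S2.
Proof. by rewrite /ltL !rho_Phi; congr andb; apply: refine_Phi. Qed.

Lemma hdn' : (d' < n')%N.
Proof. by apply: ltn_sub2r => //; apply: leq_ltn_trans hXd hdn. Qed.

Lemma mu_relabel k S : inL d' S -> rho d' S < k%:Z -> mu d' S = mu d (Phi S).
Proof.
elim: k S => [|k IH] S LS hk.
  by have := lt_le_trans hk (rho_ge0 LS); rewrite ltxx.
case: (eqVneq S set0) => [-> | S0].
  by rewrite /Phi imset0 !mu0.
have LP : inL d (Phi S) by rewrite inL_Phi.
have P0 : Phi S != set0 by rewrite -card_gt0 card_Phi card_gt0.
rewrite (mu_rec hdn' LS S0) (mu_rec hdn LP P0); congr (- _).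
have hk' : rho d' S <= k%:Z by move: hk; rewrite -[k.+1]addn1 PoszD ltzD1.
rewrite (reindex_onto Phi Psi); last first.
  move=> R /andP[LR lt]; apply: PhiPsi => Y YR.
  have rf : refine R (Phi S) by case/andP: lt.
  have [W /imsetP[U _ ->] WY] := (refineP _ _ rf) _ YR.
  by apply: subset_trans WY; apply: X_phi.
apply/esym; apply: eq_big => [S' | S' /andP[/andP[LS' lt] _]].
  by rewrite inL_Phi ltL_Phi PsiPhi eqxx andbT.
rewrite inL_Phi in LS'; rewrite ltL_Phi in lt.
apply/esym; apply: IH => //; apply: lt_le_trans _ hk'.
by case/andP: lt.
Qed.

Lemma mu_top : mu d' [set set0 : {set 'I_n'}] = mu d [set X].
Proof.
have L : inL d' [set set0 : {set 'I_n'}] by apply: inL_top.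
rewrite (@mu_relabel (absz (rho d' [set set0 : {set 'I_n'}])).+1) //.
  by rewrite /Phi imset_set1 /phi imset0 setU0.
by rewrite -[_.+1]addn1 PoszD ltzD1 abszE ler_norm.
Qed.

End Relabel.

Theorem proposition4p1 (n d : nat) (T : {set {set 'I_n}}) :
  (d < n)%N -> inL d T -> T != set0 ->
  mu d T = \prod_(X in T) mu (n := (n - #|X|)%N) (d - #|X|)%N [set set0].
Proof.
move=> hdn LT T0; rewrite (mu_prod hdn LT T0).
apply: eq_bigr => X XT; rewrite mu_top //.
exact: inL_size LT XT.
Qed.
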